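(* Let $(q,E)$ be an annotated CQ. (1) If there is any CQ that fits $E$, then there is a $\preceq^{\mathrm{edit\text{-}dist}}$-repair for $(q,E)$. (2) If there is any CQ $q'$ that fits $E$ with $q\subseteq q'$, then there is a $\preceq^{\mathrm{edit\text{-}dist}}$-generalization for $(q,E)$. (3) If there is any CQ $q'$ that fits $E$ with $q'\subseteq q$, then there is a $\preceq^{\mathrm{edit\text{-}dist}}$-specialization for $(q,E)$. Moreover, there are at most finitely many $\preceq^{\mathrm{edit\text{-}dist}}$-repairs, $\preceq^{\mathrm{edit\text{-}dist}}$-generalizations, and $\preceq^{\mathrm{edit\text{-}dist}}$-specializations for $(q,E)$, up to equivalence.
   Context: All CQs are $q(x_1,\dots,x_k)\text{ :- }\alpha_1,\dots,\alpha_n$ (relational atoms, no constants, pairwise distinct answer variables each occurring in an atom). Data examples are $(I,\mathbf a)$, $I$ a finite instance, $\mathbf a$ a $k$-tuple of its values; $[\![q]\!]$ is the set of data examples with $\mathbf a\in q(I)$; $\subseteq$ query containment, equivalence = containment both ways. An annotated CQ is $(q,E)$ with $E=(E^+,E^-)$ labeled examples; $q$ fits $E$ iff $E^+\subseteq[\![q]\!]$ and $E^-\cap[\![q]\!]=\emptyset$. $\mathrm{edit\text{-}dist}(q_1,q_2)=\min_\rho|\mathrm{core}(e_{q_1})\oplus\mathrm{core}(e_{\rho(q_2)})|$ over bijective variable renamings $\rho$ of $q_2(y_1,\dots,y_k)$ with $\rho(y_i)=x_i$, where $e_q$ is the canonical example (atoms of $q$ as facts, answer tuple distinguished), $\mathrm{core}$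 the homomorphism core, $\oplus$ symmetric difference of facts. $q'\preceq_q q''$ iff $\mathrm{edit\text{-}dist}(q,q')\le\mathrm{edit\text{-}dist}(q,q'')$; $\prec_q$ strict part. A $\preceq$-repair for $(q,E)$: a CQ $q'$ fitting $E$ with no CQ $q''$ fitting $E$ and $q''\prec_q q'$. A $\preceq$-generalization (resp. specialization): a CQ $q'$ fitting $E$ with $q\subseteq q'$ (resp. $q'\subseteq q$) such that no CQ $q''$ fitting $E$ with $q\subseteq q''$ (resp. $q''\subseteq q$) has $q''\prec_q q'$. Candidate CQs use only relation symbols occurring in $q$ and $E$. *)

(* Defs.v *)
From mathcomp Require Import all_boot.
Set Implicit Arguments. Unset Strict Implicit. Unset Printing Implicit Defensive.

(** Relation symbols, variables and values are natural numbers.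
    A schema is given by an arity function [ar : nat -> nat]. *)

(** An atom / fact: relation symbol together with its argument tuple. *)
Definition atom := (nat * seq nat)%type.
Definition fact := (nat * seq nat)%type.
(** A finite instance: a finite set of facts (duplicates irrelevant). *)
Definition instance := seq fact.

(** A CQ q(x1..xk) :- a1,...,an  is  (answer tuple, list of atoms). *)
Definition CQ := (seq nat * seq atom)%type.
Definition head (q : CQ) : seq nat := q.1.
Definition body (q : CQ) : seq atom := q.2.

Definition wf_CQ (ar : nat -> nat) (q : CQ) : Prop :=
  [/\ uniq (head q),
      (forall x, x \in head q -> exists2 at_, at_ \in body q & x \in at_.2)
    & (forall at_, at_ \in body q -> size at_.2 = ar at_.1)].

Definition wf_instance (ar : nat -> nat) (I : instance) : Prop :=
  forall f, f \in I -> size f.2 = ar f.1.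

Definition adom (I : instance) : seq nat := flatten (map snd I).

Definition example := (instance * seq nat)%type.
Definition data_example (ar : nat -> nat) (ex : example) : Prop :=
  wf_instance ar ex.1 /\ {subset ex.2 <= adom ex.1}.

Definition map_fact (h : nat -> nat) (f : fact) : fact := (f.1, map h f.2).

Definition answer (q : CQ) (I : instance) (a : seq nat) : Prop :=
  exists h : nat -> nat,
    map h (head q) = a /\ forall at_, at_ \in body q -> map_fact h at_ \in I.

Definition in_sem (ar : nat -> nat) (q : CQ) (ex : example) : Prop :=
  data_example ar ex /\ answer q ex.1 ex.2.

Definition contained (ar : nat -> nat) (q1 q2 : CQ) : Prop :=
  forall ex, in_sem ar q1 ex -> in_sem ar q2 ex.
Definition equivalent (ar : nat -> nat) (q1 q2 : CQ) : Prop :=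
  contained ar q1 q2 /\ contained ar q2 q1.

Definition annotation := (seq example * seq example)%type.
Definition pos (E : annotation) := E.1.
Definition neg (E : annotation) := E.2.

Definition fits (ar : nat -> nat) (q : CQ) (E : annotation) : Prop :=
  (forall ex, ex \in pos E -> in_sem ar q ex) /\
  (forall ex, ex \in neg E -> ~ in_sem ar q ex).

(** annotated CQ (q,E): E consists of data examples of the arity of q *)
Definition wf_annotation (ar : nat -> nat) (q : CQ) (E : annotation) : Prop :=
  forall ex, ex \in pos E ++ neg E ->
    data_example ar ex /\ size ex.2 = size (head q).

Definition hom_ex (I : instance) (a : seq nat) (J : instance) (b : seq nat) : Prop :=
  exists h : nat -> nat, map h a = b /\ forall f, f \in I -> map_fact h f \in J.

Definition sub_inst (J I : instance) : Prop := {subset J <= I}.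
Definition proper_sub (J I : instance) : Prop :=
  sub_inst J I /\ exists2 f, f \in I & f \notin J.

Definition is_core (I : instance) (a : seq nat) (J : instance) : Prop :=
  [/\ sub_inst J I, hom_ex I a J a
    & forall J', proper_sub J' J -> ~ hom_ex J a J' a].

Definition symdiff_size (I J : instance) : nat :=
  size [seq f <- undup (I ++ J) | (f \in I) != (f \in J)].

(** The canonical example e_q is (body q, head q).
    The minimum ranges over bijective renamings rho (of the whole variable
    universe) with rho(y_i) = x_i, and over the choice of core
    representatives (the value does not depend on that choice). *)
Definition edit_dist_le (q1 q2 : CQ) (n : nat) : Prop :=
  exists (C1 C2 : instance) (rho : nat -> nat),
    [/\ is_core (body q1) (head q1) C1,
        is_core (body q2) (head q2) C2,
        bijective rho,
        map rho (head q2) = head q1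
      & symdiff_size C1 (map (map_fact rho) C2) <= n].

(** q1 <=_q q2  iff  edit-dist(q,q1) <= edit-dist(q,q2) *)
Definition dist_preceq (q q1 q2 : CQ) : Prop :=
  forall n, edit_dist_le q q2 n -> edit_dist_le q q1 n.
Definition dist_prec (q q1 q2 : CQ) : Prop :=
  dist_preceq q q1 q2 /\ ~ dist_preceq q q2 q1.

Definition rels_of_CQ (q : CQ) : seq nat := map fst (body q).
Definition rels_of_annot (E : annotation) : seq nat :=
  flatten [seq map fst ex.1 | ex <- pos E ++ neg E].

Definition candidate (ar : nat -> nat) (q : CQ) (E : annotation) (q' : CQ) : Prop :=
  [/\ wf_CQ ar q', size (head q') = size (head q)
    & {subset rels_of_CQ q' <= rels_of_CQ q ++ rels_of_annot E}].

Definition is_repair ar q E q' : Prop :=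
  [/\ candidate ar q E q', fits ar q' E
    & ~ exists q'', [/\ candidate ar q E q'', fits ar q'' E & dist_prec q q'' q']].

Definition is_generalization ar q E q' : Prop :=
  [/\ candidate ar q E q', fits ar q' E, contained ar q q'
    & ~ exists q'', [/\ candidate ar q E q'', fits ar q'' E, contained ar q q''
                      & dist_prec q q'' q']].

Definition is_specialization ar q E q' : Prop :=
  [/\ candidate ar q E q', fits ar q' E, contained ar q' q
    & ~ exists q'', [/\ candidate ar q E q'', fits ar q'' E, contained ar q'' q
                      & dist_prec q q'' q']].

Definition finitely_many_upto_equiv ar (P : CQ -> Prop) : Prop :=
  exists L : seq CQ, forall q', P q' -> exists2 r, r \in L & equivalent ar q' r.

(* Main.v *)
Require Import Defs.
From mathcomp Require Import all_boot.
From Stdlib Require Import Classical.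
Import Defs.
Set Implicit Arguments. Unset Strict Implicit. Unset Printing Implicit Defensive.

Lemma edit_mono q1 q2 n m : edit_dist_le q1 q2 n -> n <= m -> edit_dist_le q1 q2 m.
Proof.
move=> [C1 [C2 [rho [h1 h2 h3 h4 h5]]]] nm.
exists C1, C2, rho; split => //; exact: leq_trans h5 nm.
Qed.

Lemma map_fact_comp g h f : map_fact (g \o h) f = map_fact g (map_fact h f).
Proof. by rewrite /map_fact /= map_comp. Qed.

Lemma hom_comp I a J b K c : hom_ex I a J b -> hom_ex J b K c -> hom_ex I a K c.
Proof.
move=> [h [ha hI]] [g [gb gJ]]; exists (g \o h); split.
  by rewrite map_comp ha gb.
by move=> f fI; rewrite map_fact_comp; apply: gJ; apply: hI.
Qed.

Lemma hom_id I a : hom_ex I a I a.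
Proof.
exists id; split; first exact: map_id.
by move=> [s t] fI; rewrite /map_fact /= map_id.
Qed.

Lemma size_undup_proper (A B : instance) f :
  {subset A <= B} -> f \in B -> f \notin A -> size (undup A) < size (undup B).
Proof.
move=> AB fB fA.
have u : uniq (f :: undup A) by rewrite /= mem_undup fA undup_uniq.
have := uniq_leq_size u; apply => x; rewrite inE mem_undup => /orP [/eqP -> | xA].
  by rewrite mem_undup.
by rewrite mem_undup; apply: AB.
Qed.

Lemma core_exists I a : exists J, is_core I a J.
Proof.
suff H : forall n J, size (undup J) < n -> sub_inst J I -> hom_ex I a J a ->
  exists J', is_core I a J'.
  apply: (H (size (undup I)).+1 I) => //; exact: hom_id.
elim=> [|n IH] J // sJ JI hJ.
case: (classic (exists J', proper_sub J' J /\ hom_ex J a J' a)).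
  move=> [J' [[J'J [f fJ fJ']] hJ']].
  apply: (IH J').
  - exact: leq_trans (size_undup_proper J'J fJ fJ') (ltnSE sJ).
  - by move=> x /J'J /JI.
  - exact: hom_comp hJ hJ'.
move=> nex; exists J; split => // J' pJ' hJ'; apply: nex; by exists J'.
Qed.

Definition tr (z y w : nat) := if w == z then y else if w == y then z else w.

Lemma tr_inv z y : involutive (tr z y).
Proof.
move=> w; rewrite /tr.
case: (eqVneq w z) => [->|wz]; first by rewrite eqxx; case: (eqVneq y z) => [->|]; rewrite ?eqxx.
case: (eqVneq w y) => [->|wy]; first by rewrite eqxx.
by rewrite (negbTE wz) (negbTE wy).
Qed.

Lemma rho_exists (a b : seq nat) : uniq a -> uniq b -> size a = size b ->
  exists rho, bijective rho /\ map rho a = b.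
Proof.
elim: a b => [|x a IH] [|y b] //=.
  by move=> _ _ _; exists id; split => //; exact: (Bijective (g:=id)).
move=> /andP [xa ua] /andP [yb ub] [sz].
have [rho0 [b0 m0]] := IH b ua ub sz.
set z := rho0 x.
have zb : z \notin b.
  by rewrite -m0 (mem_map (bij_inj b0)).
exists (tr z y \o rho0); split.
  apply: bij_comp => //; exact: inv_bij (tr_inv z y).
rewrite /= /tr eqxx; congr (_ :: _).
rewrite map_comp m0 -[RHS]map_id; apply/eq_in_map => w wb /=.
have wz : (w == z) = false by apply/negbTE; apply: contraNneq zb => <-.
have wy : (w == y) = false by apply/negbTE; apply: contraNneq yb => <-.
by rewrite wz wy.
Qed.

Lemma dist_exists ar q E q' : wf_CQ ar q -> candidate ar q E q' ->
  exists n, edit_dist_le q q' n.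
Proof.
move=> [uq _ _] [[uq' _ _] sz _].
have [C1 c1] := core_exists (body q) (head q).
have [C2 c2] := core_exists (body q') (head q').
have [rho [br mr]] := rho_exists uq' uq sz.
by exists (symdiff_size C1 (map (map_fact rho) C2)), C1, C2, rho.
Qed.

Lemma nat_min (Q : nat -> Prop) : (exists n, Q n) -> exists n, Q n /\ forall m, Q m -> n <= m.
Proof.
move=> [n Qn].
elim: n {-2}n (leqnn n) Qn => [|N IH] n nN Qn.
  by exists n; split => // m _; move: nN; rewrite leqn0 => /eqP ->.
case: (classic (exists m, m < n /\ Q m)).
  move=> [m [mn Qm]]; apply: (IH m) => //; by rewrite -ltnS (leq_trans mn nN).
move=> nex; exists n; split => // m Qm; rewrite leqNgt; apply/negP => mn.
by apply: nex; exists m.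
Qed.

Fixpoint tuples (n M : nat) : seq (seq nat) :=
  if n is n'.+1 then [seq x :: t | x <- iota 0 M, t <- tuples n' M] else [:: [::]].

Lemma mem_tuples M t : all (fun x => x < M) t -> t \in tuples (size t) M.
Proof.
elim: t => [|x t IH] //= /andP [xM tM].
apply: (allpairs_f (fun x t => x :: t)); last exact: IH.
by rewrite mem_iota add0n.
Qed.

Fixpoint pow (s : seq fact) : seq instance :=
  if s is x :: s' then pow s' ++ map (cons x) (pow s') else [:: [::]].

Lemma filter_pow p s : filter p s \in pow s.
Proof.
elim: s => [|x s IH] //=; rewrite mem_cat; case: (p x).
  by rewrite map_f ?orbT.
by rewrite IH.
Qed.

Definition allfacts (ar : nat -> nat) (R : seq nat) (M : nat) : seq fact :=
  [seq (s, t) | s <- R, t <- tuples (ar s) M].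

Lemma size_undup_count (B u : instance) : uniq u -> {subset B <= u} ->
  size (undup B) = count (mem B) u.
Proof.
move=> uu Bu; rewrite -size_filter; apply: perm_size; apply: uniq_perm.
- exact: undup_uniq.
- exact: filter_uniq.
move=> x; rewrite mem_undup mem_filter /=.
by case xB: (x \in B) => //=; rewrite (Bu _ xB).
Qed.

Lemma undup_symdiff (A B : instance) :
  size (undup B) <= size (undup A) + symdiff_size A B.
Proof.
set u := undup (A ++ B).
have uu : uniq u by exact: undup_uniq.
rewrite (@size_undup_count B u) //; last by move=> x xB; rewrite mem_undup mem_cat xB orbT.
rewrite (@size_undup_count A u) //; last by move=> x xA; rewrite mem_undup mem_cat xA.
rewrite /symdiff_size size_filter -/u.
rewrite -count_predUI; apply: leq_trans (leq_addr _ _).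
apply: sub_count => x /=; by case: (x \in A); case: (x \in B).

Qed.

Lemma sumn_mem (ar : nat -> nat) R s : s \in R -> ar s <= sumn (map ar R).
Proof.
elim: R => [|x R IH] //=; rewrite inE => /orP [/eqP ->|sR].
  exact: leq_addr.
exact: leq_trans (IH sR) (leq_addl _ _).
Qed.

Lemma sumn_bound (s : instance) A : (forall f, f \in s -> size f.2 <= A) ->
  sumn (map size (map snd s)) <= size s * A.
Proof.
elim: s => [|x s IH] //= H.
rewrite mulSn; apply: leq_add; first by apply: H; rewrite inE eqxx.
by apply: IH => f fs; apply: H; rewrite inE fs orbT.
Qed.

Lemma bound ar q E d : exists L : seq CQ, forall q', candidate ar q E q' ->
  edit_dist_le q q' d -> exists2 r, r \in L & equivalent ar q' r.
Proof.
set R := rels_of_CQ q ++ rels_of_annot E.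
set A := sumn (map ar R).
set k := size (head q).
set M := k + (size (body q) + d) * A.
exists [seq (h, b) | h <- tuples k M, b <- pow (allfacts ar R M)].
move=> q' [[uq' hq' aq'] szq' relq'] [C1 [C2 [rho [c1 c2 brho mrho sd]]]].
set V := undup (head q' ++ flatten (map snd (undup C2))).
set sg := fun x => index x V.
set B := map (map_fact sg) C2.
have C2q' : {subset C2 <= body q'} by case: c2.
have arA : forall f, f \in C2 -> size f.2 = ar f.1 /\ f.1 \in R.
  move=> f fC2; split; first by apply: aq'; apply: C2q'.
  by apply: relq'; rewrite /rels_of_CQ map_f // C2q'.
have szC2 : size (undup C2) <= size (body q) + d.
  have inj : injective (map_fact rho).
    move=> [s1 t1] [s2 t2] [-> /(inj_map (bij_inj brho)) ->] //.
  rewrite -(size_map (map_fact rho)) -undup_map_inj //.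
  apply: leq_trans (undup_symdiff C1 _) _; apply: leq_add => //.
  apply: uniq_leq_size; first exact: undup_uniq.
  by move=> x; rewrite mem_undup; case: c1 => + _ _; apply.
have szV : size V <= M.
  apply: leq_trans (size_undup _) _.
  rewrite size_cat size_flatten szq' -/k leq_add2l /shape.
  apply: leq_trans (sumn_bound (s := undup C2) (A := A) _) _.
    move=> f; rewrite mem_undup => /arA [-> fR]; exact: sumn_mem.
  by rewrite leq_mul2r szC2 orbT.
have inV : forall x, x \in V -> sg x < M.
  by move=> x xV; apply: leq_trans szV; rewrite /sg index_mem.
have tV : forall f x, f \in C2 -> x \in f.2 -> x \in V.
  move=> f x fC2 xf; rewrite mem_undup mem_cat; apply/orP; right.
  by apply/flattenP; exists f.2 => //; rewrite map_f // mem_undup.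
have Ball : forall f, f \in B -> f \in allfacts ar R M.
  move=> f /mapP [[s t] gC2 ->]; have [sz sR] := arA _ gC2.
  rewrite /map_fact /allfacts /=; apply/allpairsPdep; exists s, (map sg t); split => //.
  rewrite -sz -(size_map sg); apply: mem_tuples; apply/allP => y /mapP [x xt ->].
  exact: inV (tV _ _ gC2 xt).
exists (map sg (head q'), filter (fun f => f \in B) (allfacts ar R M)).
  apply: (allpairs_f (fun h b => (h, b))); last exact: filter_pow.
  rewrite /k -szq' -(size_map sg); apply: mem_tuples; apply/allP => y /mapP [x xt ->].
  by apply: inV; rewrite mem_undup mem_cat xt.
split => ex [dex ans]; split => //.
  move: ans => [h [eh ah]].
  exists (fun y => h (nth 0 V y)).
  have hV : forall x, x \in V -> h (nth 0 V (sg x)) = h x.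
    by move=> x xV; rewrite /sg nth_index.
  split.
    rewrite /head /= -map_comp -eh; apply/eq_in_map => x xh /=.
    by apply: hV; rewrite mem_undup mem_cat xh.
  move=> at_; rewrite /body /= mem_filter => /andP [/mapP [g gC2 ->] _].
  have -> : map_fact (fun y => h (nth 0 V y)) (map_fact sg g) = map_fact h g.
    rewrite /map_fact /= -map_comp; congr (_, _); apply/eq_in_map => x xg /=.
    exact: hV (tV _ _ gC2 xg).
  by apply: ah; apply: C2q'.
move: ans => [h' [eh ah]].
case: c2 => _ [g [gh gC2]] _.
exists (fun x => h' (sg (g x))); split.
  rewrite -eh /head /=; move: gh; rewrite /head => gh; by rewrite -{2}gh -!map_comp.
move=> at_ atq.
have : map_fact sg (map_fact g at_) \in filter (fun f => f \in B) (allfacts ar R M).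
  rewrite mem_filter; have inB : map_fact sg (map_fact g at_) \in B.
    by rewrite map_f // gC2.
  by rewrite /= inB Ball.
move/ah; by rewrite -!map_fact_comp.
Qed.

Definition is_min q (P : CQ -> Prop) q' :=
  P q' /\ ~ exists q'', P q'' /\ dist_prec q q'' q'.

Lemma min_exists ar q E (P : CQ -> Prop) : wf_CQ ar q ->
  (forall r, P r -> candidate ar q E r) -> (exists r, P r) -> exists r, is_min q P r.
Proof.
move=> wq PC [r0 Pr0].
have [n0 e0] := dist_exists wq (PC _ Pr0).
have [n [[r [Pr er]] nmin]] :=
  @nat_min (fun n => exists r, P r /\ edit_dist_le q r n) (ex_intro _ n0 (ex_intro _ r0 (conj Pr0 e0))).
exists r; split => // -[r'' [Pr'' [_ npre]]]; apply: npre => m em.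
apply: edit_mono er _; apply: nmin; by exists r''.
Qed.

Lemma min_finite ar q E (P : CQ -> Prop) : wf_CQ ar q ->
  (forall r, P r -> candidate ar q E r) -> finitely_many_upto_equiv ar (is_min q P).
Proof.
move=> wq PC.
case: (classic (exists q0, is_min q P q0)); last first.
  by move=> H; exists [::] => q' mq'; exfalso; apply: H; exists q'.
move=> [q0 [Pq0 m0]].
have [n0 e0] := dist_exists wq (PC _ Pq0).
have [L HL] := bound ar q E n0.
exists L => q' [Pq' mq']; apply: HL; first exact: PC.
apply: NNPP => ne; apply: mq'; exists q0; split => //; split.
  move=> m em; case: (leqP n0 m) => [le|lt]; first exact: edit_mono e0 le.
  by exfalso; apply: ne; apply: edit_mono em (ltnW lt).
by move=> pre; apply: ne; apply: pre.
Qed.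

Lemma fin_mono ar (P Q : CQ -> Prop) : (forall r, P r -> Q r) ->
  finitely_many_upto_equiv ar Q -> finitely_many_upto_equiv ar P.
Proof. by move=> PQ [L HL]; exists L => r /PQ /HL. Qed.

Theorem theorem35 (ar : nat -> nat) (q : CQ) (E : annotation) :
  wf_CQ ar q -> wf_annotation ar q E ->
  [/\ (exists q', candidate ar q E q' /\ fits ar q' E) ->
        exists q', is_repair ar q E q',
      (exists q', [/\ candidate ar q E q', fits ar q' E & contained ar q q']) ->
        exists q', is_generalization ar q E q',
      (exists q', [/\ candidate ar q E q', fits ar q' E & contained ar q' q]) ->
        exists q', is_specialization ar q E q'
    & [/\ finitely_many_upto_equiv ar (is_repair ar q E),
          finitely_many_upto_equiv ar (is_generalization ar q E)
        & finitely_many_upto_equiv ar (is_specialization ar q E)]].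
Proof.
move=> wq _.
set P1 := fun r => candidate ar q E r /\ fits ar r E.
set P2 := fun r => [/\ candidate ar q E r, fits ar r E & contained ar q r].
set P3 := fun r => [/\ candidate ar q E r, fits ar r E & contained ar r q].
have C1 : forall r, P1 r -> candidate ar q E r by move=> r [].
have C2 : forall r, P2 r -> candidate ar q E r by move=> r [].
have C3 : forall r, P3 r -> candidate ar q E r by move=> r [].
split.
- move=> ex; have [r [[cr fr] nr]] := min_exists wq C1 ex.
  exists r; split => // -[q'' [a b c]]; apply: nr; exists q''; split => //.
- move=> ex; have [r [[cr fr kr] nr]] := min_exists wq C2 ex.
  exists r; split => // -[q'' [a b c e]]; apply: nr; exists q''; split => //.
- move=> ex; have [r [[cr fr kr] nr]] := min_exists wq C3 ex.
  exists r; split => // -[q'' [a b c e]]; apply: nr; exists q''; split => //.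
split.
- apply: fin_mono (min_finite wq C1) => r [cr fr nr]; split => //.
  by move=> [q'' [[a b] c]]; apply: nr; exists q''.
- apply: fin_mono (min_finite wq C2) => r [cr fr kr nr]; split => //.
  by move=> [q'' [[a b c] e]]; apply: nr; exists q''.
- apply: fin_mono (min_finite wq C3) => r [cr fr kr nr]; split => //.
  by move=> [q'' [[a b c] e]]; apply: nr; exists q''.
Qed.
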